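(* Let $D$ be a finite digraph and let $\mathcal{S}=\{S_1,\dots,S_t\}$ be a minimum dicoloring of $D$ (i.e., $t=\chi'(D)$). Then there exists a directed path $P$ of $D$ orthogonal to $\mathcal{S}$, that is, $|V(P)\cap S_i|=1$ for every $i\in\{1,\dots,t\}$.
   Context: A dicoloring of $D$ is a partition of $V(D)$ into sets $S_1,\dots,S_t$ such that each induced subdigraph $D[S_i]$ is acyclic. The dichromatic number $\chi'(D)$ is the minimum size of a dicoloring of $D$; a minimum dicoloring is a dicoloring of size $\chi'(D)$. *)

(* Defs.v *)
(* A finite digraph is a finType T of vertices with an arc
   relation e : rel T (e x y = there is an arc x -> y). *)
From mathcomp Require Import all_boot.
Set Implicit Arguments. Unset Strict Implicit. Unset Printing Implicit Defensive.

(* D[S] contains a directed cycle: a closed directed walk x -> p1 -> ... -> x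
   all of whose vertices lie in S (covers loops, digons, longer cycles). *)
Definition has_dicycle_in (T : finType) (e : rel T) (S : {set T}) : Prop :=
  exists (x : T) (p : seq T),
    [/\ x \in S, all (fun y => y \in S) p, path e x p & e (last x p) x].

Definition acyclic_set (T : finType) (e : rel T) (S : {set T}) : Prop :=
  ~ has_dicycle_in e S.

Definition dicoloring (T : finType) (e : rel T) (P : {set {set T}}) : Prop :=
  partition P [set: T] /\ forall S, S \in P -> acyclic_set e S.

Definition min_dicoloring (T : finType) (e : rel T) (P : {set {set T}}) : Prop :=
  dicoloring e P /\ forall Q, dicoloring e Q -> #|P| <= #|Q|.

Definition dipath (T : finType) (e : rel T) (x : T) (p : seq T) : bool :=
  path e x p && uniq (x :: p).

Definition orthogonal (T : finType) (x : T) (p : seq T) (P : {set {set T}}) : Prop :=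
  forall S, S \in P -> #|[set v in x :: p] :&: S| = 1.

(* Main.v *)
Require Import Defs.
From mathcomp Require Import all_boot zify.
Set Implicit Arguments. Unset Strict Implicit. Unset Printing Implicit Defensive.

Lemma acyclic_sub (T : finType) (e : rel T) (S S' : {set T}) :
  S \subset S' -> acyclic_set e S' -> acyclic_set e S.
Proof.
move=> sub ac [x [p [xS pS pa la]]]; apply: ac; exists x, p; split=> //.
- exact: (subsetP sub).
- by apply/allP=> y /(allP pS); apply: (subsetP sub).
Qed.

Section Core.
Variables (T : finType) (e : rel T) (c : T -> nat).

Fixpoint B i : {set T} :=
  match i with
  | 0 => [set v | c v == 0]
  | i'.+1 => [set v | (c v == i'.+1) && [exists u in B i', e u v]]
  end.

Lemma B_col i v : v \in B i -> c v = i.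
Proof. by case: i => [|i] /=; rewrite inE; [move/eqP | case/andP=> /eqP]. Qed.

Lemma Bpath i v : v \in B i ->
  exists x p, [/\ path e x p, last x p = v & map c (x :: p) = iota 0 i.+1].
Proof.
elim: i v => [|i IH] v.
  by move=> vB; exists v, [::]; split=> //=; rewrite (B_col vB).
move=> vB; have:= vB; rewrite /= inE => /andP[/eqP cv /existsP[u /andP[uB euv]]].
have [x [p [pa lp mp]]] := IH u uB.
exists x, (rcons p v); split.
- by rewrite rcons_path pa lp.
- by rewrite last_rcons.
- by rewrite -/(rcons (x :: p) v) map_rcons (_ : c x :: _ = rcons (map c (x :: p)) (c v)) // mp cv -cats1 -(iotaD 0 i.+1 1) addn1.
Qed.

Lemma has_last (a F : pred T) x p :
  (forall u v, F u -> F v -> a u -> e u v -> a v) ->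
  path e x p -> all F (x :: p) -> has a (x :: p) -> a (last x p).
Proof.
move=> cl; elim: p x => [|y p IH] x /=; first by rewrite orbF.
move=> /andP[exy pa] /and3P[Fx Fy Fp] /orP[ax|].
  apply: IH => //; first by rewrite /= Fy.
  by rewrite /= (cl x y).
by move=> h; apply: IH => //=; rewrite Fy.
Qed.

Lemma all_closed (a F : pred T) x p :
  (forall u v, F u -> F v -> a u -> e u v -> a v) ->
  path e x p -> all F (x :: p) -> a x -> all a (x :: p).
Proof.
move=> cl; elim: p x => [|y p IH] x /=; first by move=> _ _ ->.
move=> /andP[exy pa] /and3P[Fx Fy Fp] ax.
rewrite ax /=; apply: IH => //; first by rewrite /= Fy.
exact: (cl x y).
Qed.

Variable t : nat.
Hypothesis hc : forall v, c v < t.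
Hypothesis hac : forall k, acyclic_set e [set v | c v == k].
Hypothesis hmin : forall c' : T -> nat, (forall v, c' v < t.-1) ->
  (forall k, acyclic_set e [set v | c' v == k]) -> False.

Lemma core (v0 : T) : exists x p, path e x p /\ map c (x :: p) = iota 0 t.
Proof.
have t0 : 0 < t by apply: leq_ltn_trans (hc v0).
case: (set_0Vmem (B t.-1)) => [B0|[v vB]]; last first.
  by have [x [p [pa _ mp]]] := Bpath vB; exists x, p; rewrite mp prednK.
exfalso; set i := t.-1 in B0.
pose a v := (c v < i) && (v \in B (c v)).
pose c' v := if a v then c v else (c v).-1.
have nota0 v : ~~ a v -> c v = (c v).-1.+1.
  move=> na; case cv: (c v) => [|n] //; exfalso; move: na.
  rewrite /a cv; case: (posnP i) => [i0|ip /=].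
    have : v \in B 0 by rewrite /= inE cv.
    by rewrite -i0 B0 inE.
  by rewrite /= inE cv.
apply: (hmin (c' := c')).
  move=> v; rewrite /c'; case av: (a v); first by case/andP: av.
  have h1 := hc v; have h2 := nota0 v (negbT av); lia.
move=> k [x [p [xS pS pa la]]].
pose F := fun v => v \in [set v | c' v == k].
have FA v : F v -> a v -> c v = k.
  by rewrite /F inE /c' => /eqP; case: (a v).
have FB v : F v -> ~~ a v -> c v = k.+1.
  rewrite /F inE /c' => /eqP h na; move: h; rewrite (negbTE na) => h.
  by rewrite (nota0 v na) h.
have cl u v : F u -> F v -> a u -> e u v -> a v.
  move=> Fu Fv au euv; apply/negPn/negP=> nav.
  have cu := FA u Fu au; have cv := FB v Fv nav.
  have vB : v \in B k.+1.
    rewrite /= inE cv eqxx /=; apply/existsP; exists u.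
    by move: au; rewrite /a cu => /andP[_ ->].
  move: au nav; rewrite /a cu cv vB andbT => /andP[ki _] ni.
  have ei : k.+1 = i by apply/eqP; rewrite eqn_leq ki leqNgt ni.
  by move: vB; rewrite ei B0 inE.
have Fall : all F (x :: p) by apply/andP; split.
case hA: (has a (x :: p)).
  have al := has_last cl pa Fall hA.
  have ax : a x.
    apply: (cl _ _ _ _ al la) => //.
    by apply: (allP Fall); apply: mem_last.
  have aall := all_closed cl pa Fall ax.
  have hk := @hac k; rewrite /acyclic_set in hk; apply: hk; exists x, p; split=> //.
  - by rewrite inE (FA x (allP Fall x (mem_head _ _)) ax).
  - apply/allP=> y yp; have yF : F y by apply: (allP Fall); rewrite inE yp orbT.
    by rewrite inE (FA y yF) // (allP aall) // inE yp orbT.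
have nall : all (predC a) (x :: p) by rewrite all_predC hA.
have hk := @hac k.+1; rewrite /acyclic_set in hk; apply: hk; exists x, p; split=> //.
- by rewrite inE (FB x (allP Fall x (mem_head _ _)) (allP nall x (mem_head _ _))).
- apply/allP=> y yp; have yF : F y by apply: (allP Fall); rewrite inE yp orbT.
  by rewrite inE (FB y yF) //; apply: (allP nall y); rewrite inE yp orbT.
Qed.
End Core.
Theorem mainTheorem2 (T : finType) (e : rel T)
    (loopless : irreflexive e) (nonempty : 0 < #|T|)
    (P : {set {set T}}) (hP : min_dicoloring e P) :
  exists (x : T) (p : seq T), dipath e x p /\ orthogonal x p P.
Proof.
case: hP => [[hpart acP] minP]; case/and3P: (hpart) => /eqP covP triv P0.
have /card_gt0P [v0 _] := nonempty.
pose c v := index (pblock P v) (enum P).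
pose t := #|P|.
have inP v : pblock P v \in P by apply: pblock_mem; rewrite covP inE.
have hc v : c v < t by rewrite /c /t cardE index_mem mem_enum.
have cE v : nth set0 (enum P) (c v) = pblock P v by rewrite nth_index ?mem_enum.
have hac k : acyclic_set e [set v | c v == k].
  case: (set_0Vmem [set v | c v == k]) => [->|[v]].
    by move=> [x [p [/[!inE] //]]].
  rewrite inE => /eqP cv; apply: (acyclic_sub (S' := pblock P v)); last exact: acP.
  apply/subsetP=> y; rewrite inE => /eqP cy.
  by rewrite -cE cv -cy cE mem_pblock covP inE.
have hmin (c' : T -> nat) : (forall v, c' v < t.-1) ->
    (forall k, acyclic_set e [set v | c' v == k]) -> False.
  move=> hc' hac'.
  pose Q := preim_partition c' [set: T].
  have dQ : dicoloring e Q.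
    split; first exact: preim_partitionP.
    move=> S /imsetP[x _ ->]; apply: (acyclic_sub (S' := [set v | c' v == c' x])) => //.
    by apply/subsetP=> y; rewrite !inE eq_sym.
  have := minP Q dQ.
  have : #|Q| <= #|[set: 'I_t.-1]|.
    apply: leq_trans (leq_imset_card (fun k : 'I_t.-1 => [set v | c' v == k]) _).
    apply: subset_leq_card; apply/subsetP=> S /imsetP[x _ ->].
    apply/imsetP; exists (Ordinal (hc' x)) => //.
    by apply/setP=> y; rewrite !inE eq_sym.
  rewrite cardsT card_ord /t => h1 h2.
  have := hc v0; rewrite /t.
  move=> h3; have := leq_trans h2 h1; move: h3; by case: #|P| => // n _; rewrite /= ltnn.
have [x [p [pa mp]]] := core hc hac hmin v0.
have sz : size (x :: p) = t by rewrite -(size_map c) mp size_iota.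
have cnth j : j < t -> c (nth x (x :: p) j) = j.
  by move=> jt; rewrite -(nth_map x 0) ?sz // mp nth_iota.
exists x, p; split.
  rewrite /dipath pa /=; have := iota_uniq 0 t; rewrite -mp => /map_uniq.
  by [].
move=> S SP; set k := index S (enum P).
have kt : k < t by rewrite /t cardE index_mem mem_enum.
suff -> : [set v in x :: p] :&: S = [set nth x (x :: p) k] by rewrite cards1.
apply/setP=> v; rewrite !inE; apply/andP/eqP.
  case=> vp vS; have pv : pblock P v = S := def_pblock triv SP vS.
  have jt : index v (x :: p) < t by rewrite -sz index_mem.
  have := cnth _ jt; rewrite nth_index // /c pv => hj.
  by rewrite /k hj nth_index.
move=> ->; set w := nth x (x :: p) k; split; first by rewrite -in_cons /w mem_nth ?sz.
have := cnth _ kt; rewrite -/w /c => h.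
have : nth set0 (enum P) (index (pblock P w) (enum P)) = nth set0 (enum P) k by rewrite h.
rewrite !nth_index ?mem_enum // => <-.
by rewrite mem_pblock covP inE.
Qed.
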